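(* Let $N=[n]$, let $v:2^N\to\mathbb{R}_+$ be a monotone valuation with $v(\emptyset)=0$, and let $X$ be a decision map for $v$. Let $p\in\mathbb{R}^n_+$ and $S=X(p)$. If (1) for every $i\in S$ there exists $T\subseteq N$ with $i\notin T$ and $v(S)-p(S)=v(T)-p(T)$, and (2) for every $i\notin S$ and every $T\subseteq N$ with $i\in T$, $v(S)-p(S)\ge v(T)-p(T\setminus\{i\})$, then $p$ is a pure Nash equilibrium of the pricing game defined by $v$ and $X$. Moreover, if $X$ is maximal, then $p$ is a pure Nash equilibrium if and only if (1) and (2) hold.
   Context: Pricing game: $N=[n]$ is a set of services, service $i$ controlled by seller $i$. A buyer has valuation $v:2^N\to\mathbb{R}_+$, monotone ($v(S)\le v(T)$ for $S\subseteq T$) with $v(\emptyset)=0$. For $p\in\mathbb{R}^n_+$ and $S\subseteq N$, $p(S)=\sum_{j\in S}p_j$. The demand correspondence is $D(v;p)=\arg\max_{S\subseteq N}\,(v(S)-p(S))$. A decision map is a function $X:\mathbb{R}^n_+\to 2^N$ with $X(p)\in D(v;p)$ for all $p$; it is maximal if for every $p$ there is no $S'\in D(v;p)$ with $X(p)\subsetneq S'$. Each seller $i$ chooses a price $p_i\in\mathbb{R}_+$ and has utility $u_i(p)=p_i\cdot\mathbf{1}\{i\in X(p)\}$. A price vector $p$ is a pure Nash equilibrium if $u_i(p)\ge u_i(p_i',p_{-i})$ for every seller $i$ and every $p_i'\in\mathbb{R}_+$. *)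

(* Defs.v *)
From mathcomp Require Import all_boot all_order all_algebra.
From mathcomp Require Import reals.
Set Implicit Arguments. Unset Strict Implicit. Unset Printing Implicit Defensive.
Import Order.TTheory GRing.Theory Num.Theory.
Local Open Scope ring_scope.

Section Pricing.
Variables (R : realType) (n : nat).

Definition price := 'I_n -> R.

Definition nonneg_price (p : price) : Prop := forall j, 0 <= p j.

Definition psum (p : price) (S : {set 'I_n}) : R := \sum_(j in S) p j.

Definition valuation (v : {set 'I_n} -> R) : Prop :=
  [/\ forall S : {set 'I_n}, 0 <= v S,
      forall S T : {set 'I_n}, S \subset T -> v S <= v T
    & v set0 = 0].

Definition utility (v : {set 'I_n} -> R) (p : price) (S : {set 'I_n}) : R :=
  v S - psum p S.

Definition in_demand (v : {set 'I_n} -> R) (p : price) (S : {set 'I_n}) : Prop :=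
  forall T, utility v p T <= utility v p S.

Definition decision_map (v : {set 'I_n} -> R) (X : price -> {set 'I_n}) : Prop :=
  forall p, nonneg_price p -> in_demand v p (X p).

Definition maximal_decision_map (v : {set 'I_n} -> R) (X : price -> {set 'I_n}) : Prop :=
  decision_map v X /\
  forall p, nonneg_price p ->
    ~ exists S', in_demand v p S' /\ X p \proper S'.

Definition deviate (p : price) (i : 'I_n) (q : R) : price :=
  fun j => if j == i then q else p j.

Definition seller_utility (X : price -> {set 'I_n}) (p : price) (i : 'I_n) : R :=
  p i * (i \in X p)%:R.

Definition pure_NE (X : price -> {set 'I_n}) (p : price) : Prop :=
  forall i (q : R), 0 <= q ->
    seller_utility X (deviate p i q) i <= seller_utility X p i.

Definition cond1 (v : {set 'I_n} -> R) (p : price) (S : {set 'I_n}) : Prop :=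
  forall i, i \in S ->
    exists T : {set 'I_n}, i \notin T /\ utility v p S = utility v p T.

Definition cond2 (v : {set 'I_n} -> R) (p : price) (S : {set 'I_n}) : Prop :=
  forall i, i \notin S -> forall T : {set 'I_n}, i \in T ->
    v T - psum p (T :\ i) <= utility v p S.

End Pricing.

(* Main.v *)
Require Import Defs.
From mathcomp Require Import all_boot all_order all_algebra.
From mathcomp Require Import reals.
From mathcomp Require Import lra.
Import Order.TTheory GRing.Theory Num.Theory.
Local Open Scope ring_scope.

Lemma psum_dev {R : realType} {n : nat} (p : price R n) (i : 'I_n) (q : R) (T : {set 'I_n}) :
  psum (deviate p i q) T = psum p T + (if i \in T then q - p i else 0).
Proof.
rewrite /psum; case: ifP => hi.
  rewrite (big_setD1 i hi) [in RHS](big_setD1 i hi) /= /deviate eqxx.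
  rewrite (eq_bigr (fun j => p j)); first lra.
  by move=> j; rewrite in_setD1 => /andP[/negPf -> _].
rewrite addr0; apply: eq_bigr => j hj; rewrite /deviate.
by case: eqP => // e; move: hj; rewrite e hi.
Qed.

Lemma psum_D1 {R : realType} {n : nat} (p : price R n) (i : 'I_n) (T : {set 'I_n}) :
  i \in T -> psum p T = p i + psum p (T :\ i).
Proof. by move=> hi; rewrite /psum (big_setD1 i hi). Qed.

Lemma dev_nonneg {R : realType} {n : nat} (p : price R n) (i : 'I_n) (q : R) :
  nonneg_price p -> 0 <= q -> nonneg_price (deviate p i q).
Proof. by move=> hp hq j; rewrite /deviate; case: eqP. Qed.

Theorem mainTheorem1 (R : realType) (n : nat)
  (v : {set 'I_n} -> R) (X : price R n -> {set 'I_n}) (p : price R n) :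
  valuation v -> decision_map v X -> nonneg_price p ->
  ((cond1 v p (X p) /\ cond2 v p (X p) -> pure_NE X p) /\
   (maximal_decision_map v X ->
      (pure_NE X p <-> cond1 v p (X p) /\ cond2 v p (X p)))).
Proof.
move=> hv hX hp.
have D0 := hX p hp.
have hsuff : cond1 v p (X p) /\ cond2 v p (X p) -> pure_NE X p.
  move=> [c1 c2] i q hq; rewrite /seller_utility.
  set p' := deviate p i q.
  have D := hX p' (dev_nonneg _ i _ hp hq).
  have dev_i : p' i = q by rewrite /p' /deviate eqxx.
  case: (boolP (i \in X p)) => hi.
    rewrite mulr1; case: (boolP (i \in X p')) => hi'; last by rewrite mulr0; apply: hp.
    rewrite mulr1 dev_i leNgt; apply/negP => hlt.
    have [T [hiT hT]] := c1 i hi.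
    have := D T; rewrite /utility !psum_dev (negPf hiT) hi'.
    have := D0 (X p'); move: hT; rewrite /utility; lra.
  rewrite mulr0; case: (boolP (i \in X p')) => hi'; last by rewrite mulr0.
  rewrite mulr1 dev_i.
  have := D (X p); rewrite /utility !psum_dev (negPf hi) hi' (psum_D1 p i _ hi').
  have := c2 i hi (X p') hi'; rewrite /utility; lra.
split; first exact: hsuff.
move=> _; split; last exact: hsuff.
move=> hNE; split.
- move=> i hi.
  have P0 : i \notin (set0 : {set 'I_n}) by rewrite inE.
  case: (@arg_maxP _ _ _ set0 (fun T : {set 'I_n} => i \notin T)
           (fun T => utility v p T) P0) => T0 hT0 hmax.
  have [e|ne] := eqVneq (utility v p T0) (utility v p (X p)).
    by exists T0; split.
  have lt0 : utility v p T0 < utility v p (X p) by rewrite lt_neqAle ne D0.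
  set d := utility v p (X p) - utility v p T0.
  have hd : 0 < d by rewrite /d subr_gt0.
  have hq : 0 <= p i + d / 2 by have := hp i; lra.
  have := hNE i _ hq; rewrite /seller_utility hi.
  set p' := deviate p i (p i + d / 2).
  have D := hX p' (dev_nonneg _ i _ hp hq).
  have dev_i : p' i = p i + d / 2 by rewrite /p' /deviate eqxx.
  case: (boolP (i \in X p')) => hi'.
    rewrite dev_i /=; lra.
  move=> _; exfalso.
  have := hmax _ hi'; have := D (X p).
  rewrite /utility !psum_dev hi (negPf hi').
  move: hd; rewrite /d /utility /=; lra.
- move=> i hi T hiT; rewrite leNgt; apply/negP => hlt.
  set d := v T - psum p (T :\ i) - utility v p (X p).
  have hd : 0 < d by rewrite /d subr_gt0.
  have hq : 0 <= d / 2 by lra.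
  have := hNE i _ hq; rewrite /seller_utility (negPf hi).
  set p' := deviate p i (d / 2).
  have D := hX p' (dev_nonneg _ i _ hp hq).
  have dev_i : p' i = d / 2 by rewrite /p' /deviate eqxx.
  case: (boolP (i \in X p')) => hi'.
    rewrite dev_i /=; lra.
  move=> _.
  have := D T; have := D0 (X p').
  rewrite /utility !psum_dev hiT (negPf hi') (psum_D1 p i _ hiT).
  move: hd; rewrite /d /utility; lra.
Qed.
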